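(* Let $\mathbb{X}$ be a Cartesian left additive category. If $f_\bullet:A\to B$ and $g_\bullet:B\to C$ are $\mathsf{D}$-sequences, then $f_\bullet\ast g_\bullet$ is a $\mathsf{D}$-sequence.
   Context: Composition in diagrammatic order. A Cartesian left additive category: finite products, hom-sets commutative monoids with $f(g+h)=fg+fh$, $f0=0$, projections additive. $\mathsf{P}(X)=X\times X$, $\mathsf{P}(f)=f\times f$. A pre-$\mathsf{D}$-sequence $f_\bullet:A\to B$ is $(f_n)_{n\ge0}$ with $f_n:\mathsf{P}^n(A)\to B$; $(h\cdot f_\bullet)_n=\mathsf{P}^n(h)f_n$; $\mathsf{T}(f_\bullet)_n=\langle\mathsf{P}^n(\pi_0)f_n,f_{n+1}\rangle$; $\mathsf{D}[f_\bullet]_n=f_{n+1}$; sums and $0_\bullet$ pointwise; composition $(f_\bullet\ast g_\bullet)_n=\mathsf{T}^n(f_\bullet)_0g_n$. A $\mathsf{D}$-sequence is a pre-$\mathsf{D}$-sequence such that for all $n$, with $X=\mathsf{P}^n(A)$: $\langle1,0\rangle\cdot\mathsf{D}^{n+1}[f_\bullet]=0_\bullet$ ($\langle1,0\rangle:X\to X\times X$); $(1\times(\pi_0+\pi_1))\cdot\mathsf{D}^{n+1}[f_\bullet]=(1\times\pi_0)\cdot\mathsf{D}^{n+1}[f_\bullet]+(1\times\pi_1)\cdot\mathsf{D}^{n+1}[f_\bullet]$ (maps $X\times(X\times X)\to X\times X$); $\ell\cdot\mathsf{D}^{n+2}[f_\bullet]=\mathsf{D}^{n+1}[f_\bullet]$,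 $\ell=\langle1,0\rangle\times\langle0,1\rangle:X\times X\to(X\times X)\times(X\times X)$; $c\cdot\mathsf{D}^{n+2}[f_\bullet]=\mathsf{D}^{n+2}[f_\bullet]$, $c=\langle\langle\pi_0\pi_0,\pi_1\pi_0\rangle,\langle\pi_0\pi_1,\pi_1\pi_1\rangle\rangle$. *)

(* Defs.v *)
(* Composition is written in DIAGRAMMATIC order: comp f g = "f then g" = fg. *)
Set Implicit Arguments.

Record CLAC := {
  ob :> Type;
  hom : ob -> ob -> Type;
  comp : forall A B C : ob, hom A B -> hom B C -> hom A C;
  idm : forall A : ob, hom A A;
  comp_id_l : forall (A B : ob) (f : hom A B), comp (idm A) f = f;
  comp_id_r : forall (A B : ob) (f : hom A B), comp f (idm B) = f;
  comp_assoc : forall (A B C D : ob) (f : hom A B) (g : hom B C) (h : hom C D),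
      comp (comp f g) h = comp f (comp g h);
  add : forall A B : ob, hom A B -> hom A B -> hom A B;
  zero : forall A B : ob, hom A B;
  add_assoc : forall (A B : ob) (f g h : hom A B), add (add f g) h = add f (add g h);
  add_comm : forall (A B : ob) (f g : hom A B), add f g = add g f;
  add_0l : forall (A B : ob) (f : hom A B), add (zero A B) f = f;
  comp_addr : forall (A B C : ob) (f : hom A B) (g h : hom B C),
      comp f (add g h) = add (comp f g) (comp f h);
  comp_0r : forall (A B C : ob) (f : hom A B), comp f (zero B C) = zero A C;
  term : ob;
  bang : forall A : ob, hom A term;
  bang_uniq : forall (A : ob) (f : hom A term), f = bang A;
  prod : ob -> ob -> ob;
  pi0 : forall A B : ob, hom (prod A B) A;
  pi1 : forall A B : ob, hom (prod A B) B;
  pair : forall A B C : ob, hom C A -> hom C B -> hom C (prod A B);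
  pair_pi0 : forall (A B C : ob) (f : hom C A) (g : hom C B), comp (pair f g) (pi0 A B) = f;
  pair_pi1 : forall (A B C : ob) (f : hom C A) (g : hom C B), comp (pair f g) (pi1 A B) = g;
  pair_uniq : forall (A B C : ob) (h : hom C (prod A B)),
      h = pair (comp h (pi0 A B)) (comp h (pi1 A B));
  pi0_add : forall (A B C : ob) (f g : hom C (prod A B)),
      comp (add f g) (pi0 A B) = add (comp f (pi0 A B)) (comp g (pi0 A B));
  pi0_zero : forall (A B C : ob), comp (zero C (prod A B)) (pi0 A B) = zero C A;
  pi1_add : forall (A B C : ob) (f g : hom C (prod A B)),
      comp (add f g) (pi1 A B) = add (comp f (pi1 A B)) (comp g (pi1 A B));
  pi1_zero : forall (A B C : ob), comp (zero C (prod A B)) (pi1 A B) = zero C B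
}.

Arguments hom {c} _ _.
Arguments comp {c A B C} _ _.
Arguments idm {c} A.
Arguments add {c A B} _ _.
Arguments zero {c} A B.
Arguments term {c}.
Arguments bang {c} A.
Arguments prod {c} _ _.
Arguments pi0 {c A B}.
Arguments pi1 {c A B}.
Arguments pair {c A B C} _ _.

Section Dseq.
Variable X : CLAC.

Definition Pob (A : X) : X := prod A A.
Definition cross {A B A' B' : X} (f : hom A A') (g : hom B B') : hom (prod A B) (prod A' B') :=
  pair (comp pi0 f) (comp pi1 g).
Definition Pmorph {A B : X} (f : hom A B) : hom (Pob A) (Pob B) := cross f f.

(** P^n on objects.  [Pn] iterates "inside" (P^{n+1}(A) = P^n(P(A))), [Po] iterates
    "outside" (P^{n+1}(A) = P(P^n(A))); both are the same object P^n(A) (the two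
    presentations are only chosen to make the various components typecheck
    definitionally). *)
Fixpoint Pn (n : nat) (A : X) : X :=
  match n with O => A | S n' => Pn n' (Pob A) end.
Fixpoint Po (n : nat) (A : X) : X :=
  match n with O => A | S n' => Pob (Po n' A) end.

Fixpoint Pmor (n : nat) {A B : X} (h : hom A B) : hom (Pn n A) (Pn n B) :=
  match n return hom (Pn n A) (Pn n B) with
  | O => h
  | S n' => Pmor n' (Pmorph h)
  end.

Definition preD (A B : X) : Type := forall n : nat, hom (Pn n A) B.

Definition act {A A' B : X} (h : hom A A') (f : preD A' B) : preD A B :=
  fun n => comp (Pmor n h) (f n).
Definition seq_add {A B : X} (f g : preD A B) : preD A B := fun n => add (f n) (g n).
Definition seq_zero (A B : X) : preD A B := fun n => zero (Pn n A) B.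
Definition Tseq {A B : X} (f : preD A B) : preD (Pob A) (Pob B) :=
  fun n => pair (comp (Pmor n pi0) (f n)) (f (S n)).
Definition Dseq {A B : X} (f : preD A B) : preD (Pob A) B := fun n => f (S n).

Fixpoint Tit (n : nat) {A B : X} (f : preD A B) : preD (Pn n A) (Pn n B) :=
  match n return preD (Pn n A) (Pn n B) with
  | O => f
  | S n' => Tit n' (Tseq f)
  end.
Fixpoint Dit (n : nat) {A B : X} (f : preD A B) : preD (Po n A) B :=
  match n return preD (Po n A) B with
  | O => f
  | S n' => Dseq (Dit n' f)
  end.

Definition dcomp {A B C : X} (f : preD A B) (g : preD B C) : preD A C :=
  fun n => comp (Tit n f 0) (g n).

Definition seq_eq {A B : X} (f g : preD A B) : Prop := forall n, f n = g n.

Definition is_Dseq {A B : X} (f : preD A B) : Prop :=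
  forall n : nat,
    let Y := Po n A in
    seq_eq (act (pair (idm Y) (zero Y Y)) (Dit (S n) f)) (seq_zero Y B)
    /\ seq_eq (act (cross (idm Y) (add (@pi0 _ Y Y) (@pi1 _ Y Y))) (Dit (S n) f))
              (seq_add (act (cross (idm Y) (@pi0 _ Y Y)) (Dit (S n) f))
                       (act (cross (idm Y) (@pi1 _ Y Y)) (Dit (S n) f)))
    /\ seq_eq (act (cross (pair (idm Y) (zero Y Y)) (pair (zero Y Y) (idm Y)))
                   (Dit (S (S n)) f))
              (Dit (S n) f)
    /\ seq_eq (act (pair (pair (comp pi0 pi0) (comp pi1 pi0))
                         (pair (comp pi0 pi1) (comp pi1 pi1)) : hom (Pob (Pob Y)) (Pob (Pob Y)))
                   (Dit (S (S n)) f))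
              (Dit (S (S n)) f).
End Dseq.

Arguments Pob {X} A.
Arguments Pn {X} n A.
Arguments Po {X} n A.
Arguments preD {X} A B.
Arguments dcomp {X A B C} f g n.
Arguments is_Dseq {X A B} f.
Arguments Dit {X} n {A B} f _.
Arguments Tit {X} n {A B} f _.

(* Main.v *)
Require Import Defs.
From Stdlib Require Import Setoid Morphisms.
Set Implicit Arguments.
Unset Strict Implicit.

Section S.
Variable X : CLAC.

Lemma pair_pi0' (A B C D : X) (f : hom C A) (g : hom C B) (h : hom A D) :
  comp (pair f g) (comp pi0 h) = comp f h.
Proof. rewrite <- comp_assoc, pair_pi0; reflexivity. Qed.
Lemma pair_pi1' (A B C D : X) (f : hom C A) (g : hom C B) (h : hom B D) :
  comp (pair f g) (comp pi1 h) = comp g h.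
Proof. rewrite <- comp_assoc, pair_pi1; reflexivity. Qed.
Lemma comp_pair (A B C D : X) (h : hom D C) (f : hom C A) (g : hom C B) :
  comp h (pair f g) = pair (comp h f) (comp h g).
Proof.
  rewrite (pair_uniq _ _ _ _ (comp h (pair f g))), !comp_assoc, pair_pi0, pair_pi1.
  reflexivity.
Qed.
Lemma zero_pi0' (A B Z D : X) (h : hom A D) :
  comp (zero Z (prod A B)) (comp pi0 h) = comp (zero Z A) h.
Proof. rewrite <- comp_assoc, pi0_zero; reflexivity. Qed.
Lemma zero_pi1' (A B Z D : X) (h : hom B D) :
  comp (zero Z (prod A B)) (comp pi1 h) = comp (zero Z B) h.
Proof. rewrite <- comp_assoc, pi1_zero; reflexivity. Qed.
Lemma hom_ext (A B Z : X) (f g : hom Z (prod A B)) :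
  comp f pi0 = comp g pi0 -> comp f pi1 = comp g pi1 -> f = g.
Proof.
  intros H0 H1. rewrite (pair_uniq _ _ _ _ f), (pair_uniq _ _ _ _ g), H0, H1. reflexivity.
Qed.

Ltac simp := repeat progress (rewrite ?comp_assoc, ?pair_pi0, ?pair_pi1, ?pair_pi0', ?pair_pi1',
  ?comp_id_l, ?comp_id_r, ?comp_0r, ?comp_pair, ?comp_addr, ?zero_pi0', ?zero_pi1', ?pi0_zero, ?pi1_zero).
Ltac ext := repeat (apply hom_ext); unfold Pmorph, cross, Pob in *; simp.

Lemma cross_comp (A B A' B' A'' B'' : X) (f : hom A A') (g : hom B B') (f' : hom A' A'') (g' : hom B' B'') :
  comp (cross X f g) (cross X f' g') = cross X (comp f f') (comp g g').
Proof. ext; reflexivity. Qed.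

Lemma cross_id (A B : X) : cross X (idm A) (idm B) = idm _.
Proof. ext; reflexivity. Qed.

Lemma Pmor_comp n : forall (A B C : X) (f : hom A B) (g : hom B C),
  Pmor X n (comp f g) = comp (Pmor X n f) (Pmor X n g).
Proof.
  induction n; intros; simpl. reflexivity.
  unfold Pmorph. rewrite <- IHn. f_equal. symmetry. apply cross_comp.
Qed.

Lemma Pmor_id n : forall (A : X), Pmor X n (idm A) = idm _.
Proof.
  induction n; intros; simpl. reflexivity.
  unfold Pmorph. rewrite cross_id. apply IHn.
Qed.


Notation "u == v" := (seq_eq u v) (at level 70).

Global Instance seq_eq_Equiv (A B : X) : Equivalence (@seq_eq X A B).
Proof.
  split; unfold seq_eq; intros ?; intros; [reflexivity| symmetry; auto| etransitivity; eauto].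
Qed.

Definition spair {Z B B' : X} (u : preD Z B) (v : preD Z B') : preD Z (prod B B') :=
  fun n => pair (u n) (v n).
Definition post {Z B B' : X} (u : preD Z B) (l : hom B B') : preD Z B' :=
  fun n => comp (u n) l.

Global Instance act_Proper (A A' B : X) (h : hom A A') : Proper (@seq_eq X _ _ ==> @seq_eq X _ _) (@act X A A' B h).
Proof. intros u v E n. unfold act. rewrite (E n). reflexivity. Qed.
Global Instance spair_Proper (Z B B' : X) : Proper (@seq_eq X _ _ ==> @seq_eq X _ _ ==> @seq_eq X _ _) (@spair Z B B').
Proof. intros u v E u' v' E' n. unfold spair. rewrite (E n), (E' n). reflexivity. Qed.
Global Instance post_Proper (Z B B' : X) : Proper (@seq_eq X _ _ ==> eq ==> @seq_eq X _ _) (@post Z B B').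
Proof. intros u v E l l' <- n. unfold post. rewrite (E n). reflexivity. Qed.
Global Instance add_Proper (Z B : X) : Proper (@seq_eq X _ _ ==> @seq_eq X _ _ ==> @seq_eq X _ _) (@seq_add X Z B).
Proof. intros u v E u' v' E' n. unfold seq_add. rewrite (E n), (E' n). reflexivity. Qed.
Global Instance Dseq_Proper (Z B : X) : Proper (@seq_eq X _ _ ==> @seq_eq X _ _) (@Dseq X Z B).
Proof. intros u v E n. unfold Dseq. rewrite (E (S n)). reflexivity. Qed.
Global Instance Tseq_Proper (Z B : X) : Proper (@seq_eq X _ _ ==> @seq_eq X _ _) (@Tseq X Z B).
Proof. intros u v E n. unfold Tseq. rewrite (E n), (E (S n)). reflexivity. Qed.

Lemma Tit_resp m : forall (A B : X) (u v : preD A B), u == v -> Tit m u == Tit m v.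
Proof.
  induction m; intros; simpl. auto. apply IHm. rewrite H. reflexivity.
Qed.
Global Instance Tit_Proper m (Z B : X) : Proper (@seq_eq X _ _ ==> @seq_eq X _ _) (@Tit X m Z B).
Proof. intros u v E. apply Tit_resp; auto. Qed.
Global Instance dcomp_Proper (A B C : X) : Proper (@seq_eq X _ _ ==> @seq_eq X _ _ ==> @seq_eq X _ _) (@dcomp X A B C).
Proof. intros u v E u' v' E' n. unfold dcomp. rewrite (Tit_resp n E 0), (E' n). reflexivity. Qed.

Lemma act_act (A A' A'' B : X) (k : hom A A') (h : hom A' A'') (u : preD A'' B) :
  act k (act h u) == act (comp k h) u.
Proof. intro n; unfold act. rewrite Pmor_comp, comp_assoc. reflexivity. Qed.
Lemma act_id (A B : X) (u : preD A B) : act (idm A) u == u.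
Proof. intro n; unfold act. rewrite Pmor_id, comp_id_l. reflexivity. Qed.
Lemma act_add (A A' B : X) (h : hom A A') (u v : preD A' B) :
  act h (seq_add u v) == seq_add (act h u) (act h v).
Proof. intro n; unfold act, seq_add. apply comp_addr. Qed.
Lemma act_zero (A A' B : X) (h : hom A A') : act h (seq_zero X A' B) == seq_zero X A B.
Proof. intro n; unfold act, seq_zero. apply comp_0r. Qed.
Lemma act_spair (A A' B B' : X) (h : hom A A') (u : preD A' B) (v : preD A' B') :
  act h (spair u v) == spair (act h u) (act h v).
Proof. intro n; unfold act, spair. apply comp_pair. Qed.
Lemma spair_zero (A B B' : X) : spair (seq_zero X A B) (seq_zero X A B') == seq_zero X A (prod B B').
Proof. intro n; unfold spair, seq_zero. ext; reflexivity. Qed.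
Lemma spair_add (A B B' : X) (a b : preD A B) (c d : preD A B') :
  spair (seq_add a b) (seq_add c d) == seq_add (spair a c) (spair b d).
Proof. intro n; unfold spair, seq_add. apply hom_ext; rewrite ?pi0_add, ?pi1_add; simp; reflexivity. Qed.
Lemma dcomp_add_r (A B C : X) (F : preD A B) (G G' : preD B C) :
  dcomp F (seq_add G G') == seq_add (dcomp F G) (dcomp F G').
Proof. intro n; unfold dcomp, seq_add. apply comp_addr. Qed.
Lemma dcomp_zero_r (A B C : X) (F : preD A B) : dcomp F (seq_zero X B C) == seq_zero X A C.
Proof. intro n; unfold dcomp, seq_zero. apply comp_0r. Qed.

Lemma Tseq_act (A A' B : X) (k : hom A A') (F : preD A' B) :
  Tseq (act k F) == act (Pmorph X k) (Tseq F).
Proof.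
  intro n; unfold Tseq, act, Pob. rewrite comp_pair. f_equal.
  rewrite <- !comp_assoc, <- !Pmor_comp. f_equal. f_equal. ext. reflexivity.
Qed.
Lemma Tit_act m : forall (A A' B : X) (k : hom A A') (F : preD A' B),
  Tit m (act k F) == act (Pmor X m k) (Tit m F).
Proof.
  induction m; intros; simpl. reflexivity.
  rewrite Tseq_act. apply IHm.
Qed.
Lemma act_dcomp (A A' B C : X) (k : hom A A') (F : preD A' B) (G : preD B C) :
  act k (dcomp F G) == dcomp (act k F) G.
Proof.
  intro n; unfold dcomp. rewrite (Tit_act n k F 0). unfold act. simpl.
  rewrite comp_assoc. reflexivity.
Qed.
Lemma Tseq_post (A B B' : X) (F : preD A B) (l : hom B B') :
  Tseq (post F l) == post (Tseq F) (Pmorph X l).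
Proof. intro n; unfold Tseq, post. ext; reflexivity. Qed.
Lemma Tit_post m : forall (A B B' : X) (F : preD A B) (l : hom B B'),
  Tit m (post F l) == post (Tit m F) (Pmor X m l).
Proof.
  induction m; intros; simpl. reflexivity.
  rewrite Tseq_post. apply IHm.
Qed.
Lemma post_dcomp (A B B' C : X) (F : preD A B) (l : hom B B') (G : preD B' C) :
  dcomp (post F l) G == dcomp F (act l G).
Proof.
  intro n; unfold dcomp. rewrite (Tit_post n F l 0). unfold post, act.
  rewrite comp_assoc. reflexivity.
Qed.
Lemma actT (A A' B : X) (k : hom A (Pob A')) (F : preD A' B) :
  act k (Tseq F) == spair (act (comp k pi0) F) (act k (Dseq F)).
Proof.
  intro n; unfold act, Tseq, spair, Dseq, Pob in *. rewrite comp_pair, Pmor_comp, comp_assoc. reflexivity.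
Qed.

Lemma add_pi0' (A B Z D : X) (a b : hom Z (prod A B)) (h : hom A D) :
  comp (add a b) (comp pi0 h) = comp (add (comp a pi0) (comp b pi0)) h.
Proof. rewrite <- comp_assoc, pi0_add; reflexivity. Qed.
Lemma add_pi1' (A B Z D : X) (a b : hom Z (prod A B)) (h : hom B D) :
  comp (add a b) (comp pi1 h) = comp (add (comp a pi1) (comp b pi1)) h.
Proof. rewrite <- comp_assoc, pi1_add; reflexivity. Qed.

Definition additive {Y Y' : X} (h : hom Y Y') :=
  (forall Z, comp (zero Z Y) h = zero Z Y') /\
  (forall Z (a b : hom Z Y), comp (add a b) h = add (comp a h) (comp b h)).

Lemma additive_pi0 (A B : X) : additive (@pi0 X A B).
Proof. split; intros. apply pi0_zero. apply pi0_add. Qed.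

Lemma additive_Pmorph (Y Y' : X) (h : hom Y Y') : additive h -> additive (Pmorph X h).
Proof.
  intros [hz ha]. split; intros.
  - ext; rewrite ?hz; reflexivity.
  - ext; rewrite ?add_pi0', ?add_pi1', ?pi0_add, ?pi1_add, ?ha; simp; reflexivity.
Qed.

Lemma additive_Pmor n : forall (Y Y' : X) (h : hom Y Y'), additive h -> additive (Pmor X n h).
Proof.
  induction n; intros; simpl. auto. apply IHn. apply additive_Pmorph. auto.
Qed.

Definition Q {Y B : X} (h : preD (Pob Y) B) : Prop :=
 seq_eq (act (pair (idm Y) (zero Y Y)) h) (seq_zero X Y B)
 /\ seq_eq (act (cross X (idm Y) (add (@pi0 X Y Y) (@pi1 X Y Y))) h)
      (seq_add (act (cross X (idm Y) (@pi0 X Y Y)) h) (act (cross X (idm Y) (@pi1 X Y Y)) h))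
 /\ seq_eq (act (cross X (pair (idm Y) (zero Y Y)) (pair (zero Y Y) (idm Y))) (Dseq h)) h
 /\ seq_eq (act (pair (pair (comp pi0 pi0) (comp pi1 pi0)) (pair (comp pi0 pi1) (comp pi1 pi1))
                 : hom (Pob (Pob Y)) (Pob (Pob Y))) (Dseq h)) (Dseq h).

Lemma Q_resp (Y B : X) (h h' : preD (Pob Y) B) : Q h -> h == h' -> Q h'.
Proof.
  intros [q1 [q2 [q3 q4]]] E. unfold Q.
  rewrite <- E. auto.
Qed.

Lemma Q_spair (Y B B' : X) (u : preD (Pob Y) B) (v : preD (Pob Y) B') :
  Q u -> Q v -> Q (spair u v).
Proof.
  intros [u1 [u2 [u3 u4]]] [v1 [v2 [v3 v4]]].
  split; [|split; [|split]].
  - rewrite act_spair, u1, v1, spair_zero. reflexivity.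
  - rewrite !act_spair, u2, v2, spair_add. reflexivity.
  - change (Dseq (spair u v)) with (spair (Dseq u) (Dseq v)).
    rewrite act_spair, u3, v3. reflexivity.
  - change (Dseq (spair u v)) with (spair (Dseq u) (Dseq v)).
    rewrite act_spair, u4, v4. reflexivity.
Qed.

Lemma act_ext (A A' B : X) (u : preD A' B) (k k' : hom A A') : k = k' -> act k u == act k' u.
Proof. intros ->; reflexivity. Qed.

Lemma Q_actP (Y Y' B : X) (h : hom Y' Y) (u : preD (Pob Y) B) :
  additive h -> Q u -> Q (act (Pmorph X h) u).
Proof.
  intros [hz ha] [u1 [u2 [u3 u4]]].
  split; [|split; [|split]].
  - rewrite act_act.
    rewrite (act_ext u (k' := comp h (pair (idm Y) (zero Y Y)))) by (ext; rewrite ?hz; reflexivity).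
    rewrite <- act_act, u1, act_zero. reflexivity.
  - rewrite !act_act.
    rewrite (act_ext u (k' := comp (cross X h (cross X h h)) (cross X (idm Y) (add (@pi0 X Y Y) (@pi1 X Y Y)))))
      by (ext; rewrite ?ha; simp; reflexivity).
    rewrite (act_ext u (k := comp (cross X (idm Y') pi0) (Pmorph X h))
                       (k' := comp (cross X h (cross X h h)) (cross X (idm Y) (@pi0 X Y Y))))
      by (ext; reflexivity).
    rewrite (act_ext u (k := comp (cross X (idm Y') pi1) (Pmorph X h))
                       (k' := comp (cross X h (cross X h h)) (cross X (idm Y) (@pi1 X Y Y))))
      by (ext; reflexivity).
    rewrite <- !act_act, u2, act_add. reflexivity.
  - change (Dseq (act (Pmorph X h) u)) with (act (Pmorph X (Pmorph X h)) (Dseq u)).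
    rewrite act_act.
    rewrite (act_ext (Dseq u) (k' := comp (Pmorph X h)
         (cross X (pair (idm Y) (zero Y Y)) (pair (zero Y Y) (idm Y)))))
      by (ext; rewrite ?hz; reflexivity).
    rewrite <- act_act, u3. reflexivity.
  - change (Dseq (act (Pmorph X h) u)) with (act (Pmorph X (Pmorph X h)) (Dseq u)).
    rewrite act_act.
    rewrite (act_ext (Dseq u) (k' := comp (Pmorph X (Pmorph X h))
         (pair (pair (comp pi0 pi0) (comp pi1 pi0)) (pair (comp pi0 pi1) (comp pi1 pi1))
                 : hom (Pob (Pob Y)) (Pob (Pob Y)))))
      by (ext; reflexivity).
    rewrite <- act_act, u4. reflexivity.
Qed.

Fixpoint Dit2 (n : nat) {A B : X} (f : preD A B) : preD (Pn n A) B :=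
  match n return preD (Pn n A) B with
  | O => f
  | S n' => Dit2 n' (Dseq f)
  end.

Lemma Dit2_resp n : forall (A B : X) (u v : preD A B), u == v -> Dit2 n u == Dit2 n v.
Proof. induction n; intros; simpl. auto. apply IHn. rewrite H. reflexivity. Qed.

Lemma Dit2_spair n : forall (A B B' : X) (u : preD A B) (v : preD A B'),
  Dit2 n (spair u v) == spair (Dit2 n u) (Dit2 n v).
Proof.
  induction n; intros; simpl. reflexivity.
  rewrite <- IHn. apply Dit2_resp. intro m; reflexivity.
Qed.

Lemma Dit2_act n : forall (A A' B : X) (h : hom A A') (u : preD A' B),
  Dit2 n (act h u) == act (Pmor X n h) (Dit2 n u).
Proof.
  induction n; intros; simpl. reflexivity.
  rewrite <- IHn. apply Dit2_resp. intro m; reflexivity.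
Qed.

Definition isD' {A B : X} (f : preD A B) := forall n, Q (Dseq (Dit2 n f)).

Lemma isD'_T (A B : X) (F : preD A B) : isD' F -> isD' (Tseq F).
Proof.
  intros HF n.
  apply Q_resp with (Dseq (spair (act (Pmor X n pi0) (Dit2 n F)) (Dit2 n (Dseq F)))).
  - change (Q (spair (act (Pmorph X (Pmor X n pi0)) (Dseq (Dit2 n F))) (Dseq (Dit2 (S n) F)))).
    apply Q_spair.
    + apply Q_actP. apply additive_Pmor, additive_pi0. apply (HF n).
    + apply (HF (S n)).
  - apply Dseq_Proper.
    rewrite (Dit2_resp n (v := spair (act pi0 F) (Dseq F))) by (intro m; reflexivity).
    rewrite Dit2_spair, Dit2_act. reflexivity.
Qed.

Lemma isD'_D (A B : X) (F : preD A B) : isD' F -> isD' (Dseq F).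
Proof. intros HF n. apply (HF (S n)). Qed.

Lemma cross_id_pi0 (A B B' : X) (k : hom B B') : comp (cross X (idm A) k) pi0 = @pi0 X A B.
Proof. ext; reflexivity. Qed.

Lemma post_10 (A B : X) (F : preD A B) :
  post F (pair (idm B) (zero B B)) == spair (act (idm A) F) (seq_zero X A B).
Proof. intro n; unfold post, spair, act, seq_zero. rewrite Pmor_id. ext; reflexivity. Qed.

Lemma postK (Z B : X) (p : preD Z B) (a b : preD Z B) :
  post (spair p (spair a b)) (cross X (idm B) (add (@pi0 X B B) (@pi1 X B B))) == spair p (seq_add a b).
Proof. intro n; unfold post, spair, seq_add. ext; reflexivity. Qed.
Lemma postK0 (Z B : X) (p : preD Z B) (a b : preD Z B) :
  post (spair p (spair a b)) (cross X (idm B) (@pi0 X B B)) == spair p a.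
Proof. intro n; unfold post, spair. ext; reflexivity. Qed.
Lemma postK1 (Z B : X) (p : preD Z B) (a b : preD Z B) :
  post (spair p (spair a b)) (cross X (idm B) (@pi1 X B B)) == spair p b.
Proof. intro n; unfold post, spair. ext; reflexivity. Qed.

Lemma actTT (Z A B : X) (k : hom Z (Pob (Pob A))) (F : preD A B) :
  act k (Tseq (Tseq F)) ==
  spair (spair (act (comp (comp k pi0) pi0) F) (act (comp k pi0) (Dseq F)))
        (spair (act (comp k (Pmorph X pi0)) (Dseq F)) (act k (Dseq (Dseq F)))).
Proof.
  rewrite actT, actT.
  change (Dseq (Tseq F)) with (spair (act (Pmorph X pi0) (Dseq F)) (Dseq (Dseq F))).
  unfold Pob. rewrite act_spair, act_act. reflexivity.
Qed.

Lemma post_l (A B : X) (F : preD A B) :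
  post (Tseq F) (cross X (pair (idm B) (zero B B)) (pair (zero B B) (idm B))) ==
  spair (spair (act pi0 F) (seq_zero X _ B)) (spair (seq_zero X _ B) (Dseq F)).
Proof. intro n; unfold post, spair, seq_zero, Tseq, act, Dseq. ext; reflexivity. Qed.

Lemma post_swap (Z B : X) (a b c d : preD Z B) :
  post (spair (spair a b) (spair c d))
   (pair (pair (comp pi0 pi0) (comp pi1 pi0)) (pair (comp pi0 pi1) (comp pi1 pi1))
                 : hom (Pob (Pob B)) (Pob (Pob B))) ==
  spair (spair a c) (spair b d).
Proof. intro n; unfold post, spair. ext; reflexivity. Qed.

Lemma TT_expand (A B : X) (F : preD A B) :
  Tseq (Tseq F) == spair (spair (act (comp pi0 pi0) F) (act pi0 (Dseq F)))
                         (spair (act (Pmorph X pi0) (Dseq F)) (Dseq (Dseq F))).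
Proof.
  intro n; unfold Tseq, spair, act, Dseq, Pob in *.
  rewrite comp_pair, Pmor_comp, comp_assoc. reflexivity.
Qed.

Ltac rw E := let H := fresh in pose proof E as H; unfold Pob in H; rewrite H; clear H.
Ltac rwb E := let H := fresh in pose proof E as H; unfold Pob in H; rewrite <- H; clear H.

Lemma base (A B C : X) (F : preD A B) (G : preD B C) :
  Q (Dseq F) -> Q (Dseq G) -> Q (Dseq (dcomp F G)).
Proof.
  intros [f1 [f2 [f3 f4]]] [g1 [g2 [g3 g4]]].
  apply Q_resp with (dcomp (Tseq F) (Dseq G)); [| intro m; reflexivity].
  unfold Pob in *.
  split; [|split; [|split]].
  - rw act_dcomp. rw (actT (pair (idm A) (zero A A)) F). rw f1.
    rw (pair_pi0 _ _ _ _ (idm A) (zero A A)). rwb (post_10 F).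
    rw (post_dcomp F (pair (idm B) (zero B B)) (Dseq G)). rw g1. rw dcomp_zero_r. reflexivity.
  - rw act_dcomp. rw act_dcomp. rw act_dcomp.
    rw (actT (cross X (idm A) (add (@pi0 X A A) pi1)) F).
    rw (actT (cross X (idm A) (@pi0 X A A)) F).
    rw (actT (cross X (idm A) (@pi1 X A A)) F).
    rw f2.
    rw (@cross_id_pi0 A _ _ (add (@pi0 X A A) pi1)).
    rw (@cross_id_pi0 A _ _ (@pi0 X A A)).
    rw (@cross_id_pi0 A _ _ (@pi1 X A A)).
    set (W := spair (act pi0 F) (spair (act (cross X (idm A) (@pi0 X A A)) (Dseq F))
                                     (act (cross X (idm A) (@pi1 X A A)) (Dseq F)))).
    rwb (postK (act pi0 F) (act (cross X (idm A) (@pi0 X A A)) (Dseq F))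
                                     (act (cross X (idm A) (@pi1 X A A)) (Dseq F))).
    rwb (postK0 (act pi0 F) (act (cross X (idm A) (@pi0 X A A)) (Dseq F))
                                     (act (cross X (idm A) (@pi1 X A A)) (Dseq F))).
    rwb (postK1 (act pi0 F) (act (cross X (idm A) (@pi0 X A A)) (Dseq F))
                                     (act (cross X (idm A) (@pi1 X A A)) (Dseq F))).
    fold W.
    rw post_dcomp. rw post_dcomp. rw post_dcomp.
    rw g2. rw dcomp_add_r. reflexivity.
  - change (Dseq (dcomp (Tseq F) (Dseq G))) with (dcomp (Tseq (Tseq F)) (Dseq (Dseq G))).
    rw act_dcomp.
    rw (actTT (cross X (pair (idm A) (zero A A)) (pair (zero A A) (idm A))) F).
    rw f3.
    assert (e1 : comp (comp (cross X (pair (idm A) (zero A A)) (pair (zero A A) (idm A))) pi0) pi0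
                 = @pi0 X A A) by (ext; reflexivity).
    assert (e2 : comp (cross X (pair (idm A) (zero A A)) (pair (zero A A) (idm A))) pi0
                 = comp pi0 (pair (idm A) (zero A A))) by (ext; reflexivity).
    assert (e3 : comp (cross X (pair (idm A) (zero A A)) (pair (zero A A) (idm A))) (Pmorph X pi0)
                 = comp pi0 (pair (idm A) (zero A A))) by (ext; reflexivity).
    rw e1. rw e2. rw e3.
    rwb (act_act (@pi0 X A A) (pair (idm A) (zero A A)) (Dseq F)). rw f1. rw act_zero.
    rwb (post_l F). rw post_dcomp. rw g3. reflexivity.
  - change (Dseq (dcomp (Tseq F) (Dseq G))) with (dcomp (Tseq (Tseq F)) (Dseq (Dseq G))).
    rw act_dcomp.
    rw (actTT (pair (pair (comp pi0 pi0) (comp pi1 pi0)) (pair (comp pi0 pi1) (comp pi1 pi1))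
                 : hom (Pob (Pob A)) (Pob (Pob A))) F).
    rw f4.
    assert (e1 : comp (comp (pair (pair (comp pi0 pi0) (comp pi1 pi0)) (pair (comp pi0 pi1) (comp pi1 pi1))
                 : hom (Pob (Pob A)) (Pob (Pob A))) pi0) pi0
                 = comp (@pi0 X (Pob A) (Pob A)) pi0) by (ext; reflexivity).
    assert (e2 : comp (pair (pair (comp pi0 pi0) (comp pi1 pi0)) (pair (comp pi0 pi1) (comp pi1 pi1))
                 : hom (Pob (Pob A)) (Pob (Pob A))) pi0
                 = Pmorph X (@pi0 X A A)) by (ext; reflexivity).
    assert (e3 : comp (pair (pair (comp pi0 pi0) (comp pi1 pi0)) (pair (comp pi0 pi1) (comp pi1 pi1))
                 : hom (Pob (Pob A)) (Pob (Pob A))) (Pmorph X pi0)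
                 = @pi0 X (Pob A) (Pob A)) by (ext; reflexivity).
    rw e1. rw e2. rw e3.
    rwb (post_swap (act (comp pi0 pi0) F) (act pi0 (Dseq F)) (act (Pmorph X pi0) (Dseq F)) (Dseq (Dseq F))).
    rwb (TT_expand F). rw post_dcomp. rw g4. reflexivity.
Qed.

Lemma main_ind n : forall (A B C : X) (F : preD A B) (G : preD B C),
  isD' F -> isD' G -> Q (Dseq (Dit2 n (dcomp F G))).
Proof.
  induction n; intros A B C F G HF HG.
  - simpl. apply base; [apply (HF 0) | apply (HG 0)].
  - simpl. apply Q_resp with (Dseq (Dit2 n (dcomp (Tseq F) (Dseq G)))).
    + apply IHn; [apply isD'_T | apply isD'_D]; auto.
    + apply Dseq_Proper, Dit2_resp. intro m; reflexivity.
Qed.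

Definition Fm {B : X} (s : {Y : X & preD Y B}) : {Y : X & preD Y B} :=
  existT (fun Y => preD Y B) (Pob (projT1 s)) (Dseq (projT2 s)).

Lemma comm_D n : forall (A B : X) (f : preD A B),
  existT (fun Y => preD Y B) (Pob (Po n A)) (Dseq (Dit n f))
  = existT (fun Y => preD Y B) (Po n (Pob A)) (Dit n (Dseq f)).
Proof.
  induction n; intros; simpl. reflexivity.
  change (Fm (existT (fun Y => preD Y B) _ (Dseq (Dit n f)))
          = Fm (existT (fun Y => preD Y B) _ (Dit n (Dseq f)))).
  rewrite IHn. reflexivity.
Qed.

Lemma bridge n : forall (A B : X) (f : preD A B),
  existT (fun Y => preD Y B) (Po n A) (Dit n f) = existT (fun Y => preD Y B) (Pn n A) (Dit2 n f).
Proof.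
  induction n; intros; simpl. reflexivity.
  rewrite comm_D. apply IHn.
Qed.

Definition Qs {B : X} (s : {Y : X & preD Y B}) : Prop := Q (Dseq (projT2 s)).

Lemma isDseq_iff (A B : X) (f : preD A B) : is_Dseq f <-> isD' f.
Proof.
  split; intros H n; specialize (H n).
  - change (Q (Dseq (Dit n f))) in H.
    change (Qs (existT (fun Y => preD Y B) _ (Dit n f))) in H.
    rewrite bridge in H. exact H.
  - change (Q (Dseq (Dit n f))).
    change (Qs (existT (fun Y => preD Y B) _ (Dit n f))).
    rewrite bridge. exact H.
Qed.
End S.

Unset Implicit Arguments.
Set Strict Implicit.

Theorem lemma4p5 (X : CLAC) (A B C : X) (f : preD A B) (g : preD B C) :
  is_Dseq f -> is_Dseq g -> is_Dseq (dcomp f g).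
Proof.
  intros Hf Hg. apply isDseq_iff. intro n.
  apply main_ind; apply isDseq_iff; assumption.
Qed.
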